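(* Let $m\ge1$ and $x_{i,j}\in[-1,1]$ for $i\in[m]$, $j\in[m+1]$. Then for any $a\in\mathbb{R}^m$ there exists a subset $S\subseteq[m+1]$ with $|S|\le m$ such that \[\Big|\sum_{i=1}^m a_i\prod_{j\in S}x_{i,j}\Big|\ge\frac{1}{2^m-1}\Big|\sum_{i=1}^m a_i\prod_{j=1}^{m+1}x_{i,j}\Big|.\]
   Context: An empty product equals $1$. *)

(* Defs.v *)
From mathcomp Require Import all_boot all_order all_algebra.
From mathcomp Require Import reals.

(* Main.v *)
Require Import Defs.
From mathcomp Require Import all_boot all_order all_algebra.
From mathcomp Require Import reals.
From mathcomp Require Import ring.
Import Order.TTheory GRing.Theory Num.Theory.
Local Open Scope ring_scope.

Lemma prod_split (R : comPzRingType) (I : finType) (S : {set I}) (u v : I -> R) :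
  \prod_j (if j \in S then u j else v j) =
  (\prod_(j in S) u j) * \prod_(j in ~: S) v j.
Proof.
rewrite (bigID (mem S)) /=; congr (_ * _).
  by apply: eq_bigr => j ->.
rewrite [RHS](eq_bigl (fun j => j \notin S)); last by move=> j; rewrite in_setC.
by apply: eq_bigr => j /negbTE ->.
Qed.

Theorem lemma8 (R : realType) (m : nat) (hm : (1 <= m)%N)
  (x : 'I_m -> 'I_m.+1 -> R)
  (hx : forall i j, -1 <= x i j <= 1)
  (a : 'I_m -> R) :
  exists S : {set 'I_m.+1}, (#|S| <= m)%N /\ 
    (`| \sum_(i < m) a i * \prod_(j in S) x i j |
      >= (2 ^+ m - 1)^-1 * `| \sum_(i < m) a i * \prod_(j < m.+1) x i j |).
Proof.
pose lam := fun j : 'I_m.+1 => oapp (fun k : 'I_m => x k j) 0 (insub (val j)).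
pose f := fun S : {set 'I_m.+1} => \sum_(i < m) a i * \prod_(j in S) x i j.
pose c := fun S : {set 'I_m.+1} => \prod_(j in ~: S) (- lam j).
have lamW : forall i : 'I_m, lam (widen_ord (leqnSn m) i) = x i (widen_ord (leqnSn m) i).
  move=> i; rewrite /lam; case: insubP => [k _ kv|] /=; last by rewrite ltn_ord.
  by congr x; apply: val_inj; rewrite kv.
have lamM : lam ord_max = 0 by rewrite /lam; case: insubP => [k|] //=; rewrite ltnn.
have lam1 : forall j, `|lam j| <= 1.
  move=> j; rewrite /lam; case: insubP => [k _ _|_] /=; last by rewrite normr0.
  by rewrite ler_norml hx.
have key : \sum_(S : {set 'I_m.+1}) c S * f S = 0.
  transitivity (\sum_(i < m) a i * \prod_j (x i j - lam j)).
    rewrite /f.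
    under eq_bigr => S _ do rewrite mulr_sumr.
    rewrite exchange_big /=; apply: eq_bigr => i _.
    rewrite (bigA_distr _ _ (fun j => x i j) (fun j => - lam j)) mulr_sumr.
    apply: eq_bigr => S _; rewrite prod_split /c; ring.
  rewrite big1 // => i _.
  by rewrite (bigD1 (widen_ord (leqnSn m) i)) //= lamW subrr mul0r mulr0.
have cT : c setT = 1 by rewrite /c setCT big_set0.
have s0T : (set0 : {set 'I_m.+1}) != setT.
  apply/eqP => h; have := in_setT (@ord0 m); by rewrite -h in_set0.
have [S1 S1T S1max] : exists2 S1, S1 != setT & forall S, S != setT -> `|f S| <= `|f S1|.
  case: (@arg_maxP _ _ _ set0 (fun S : {set 'I_m.+1} => S != setT) (fun S => `|f S|) s0T).
  by move=> S1 h1 h2; exists S1.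
have h : S1 \proper setT by rewrite properT.
exists S1; split.
  by have := proper_card h; rewrite cardsT card_ord ltnS.
have fT : f setT = - \sum_(S | S != setT) c S * f S.
  by move: key; rewrite (bigD1 setT) //= cT mul1r => /eqP; rewrite addr_eq0 => /eqP.
have Tf : \sum_(i < m) a i * \prod_(j < m.+1) x i j = f setT.
  rewrite /f; apply: eq_bigr => i _; congr (_ * _).
  by apply: eq_bigl => j; rewrite in_setT.
have allc : \sum_S `|c S| = \prod_j (1 + `|lam j|).
  rewrite bigA_distr; apply: eq_bigr => S _.
  rewrite prod_split /c normr_prod big1_eq mul1r.
  by apply: eq_bigr => j _; rewrite normrN.
have prodb : \prod_j (1 + `|lam j|) <= 2 ^+ m.
  rewrite big_ord_recr /= lamM normr0 addr0 mulr1.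
  have p2 : forall n, \prod_(i < n) (2:R) = 2 ^+ n.
    by elim=> [|n IH]; rewrite ?big_ord0 // big_ord_recr IH exprSr.
  rewrite -p2; apply: ler_prod => i _.
  by rewrite addr_ge0 //= -[2]/(1 + 1) lerD2l lam1.
have sumc : \sum_(S | S != setT) `|c S| <= 2 ^+ m - 1.
  move: allc; rewrite (bigD1 setT) //= cT normr1 => e.
  by rewrite lerBrDl e.
have Dpos : 0 < (2 : R) ^+ m - 1.
  by rewrite subr_gt0 exprn_egt1 ?ltr1n // -lt0n.
rewrite Tf fT normrN ler_pdivrMl //.
apply: le_trans (ler_norm_sum _ _ _) _.
apply: (@le_trans _ _ (\sum_(S | S != setT) `|c S| * `|f S1|)).
  by apply: ler_sum => S hS; rewrite normrM ler_wpM2l // S1max.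
by rewrite -mulr_suml ler_wpM2r.
Qed.
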